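(* Let $G$ be a connected threshold graph of order $n\ge 4$ and size $m$ with $n-1<m<\binom{n}{2}$, with $c$ type 1 vertices, forward one position sequence $(f_1,\ldots,f_c)$ and numbers $F_p$ as in the context. Let $\Phi\in\mathbb{R}^{c\times c}$ be given by $\Phi_{ij}=f_{\min\{i,j\}}$, $\mathbf{1}\in\mathbb{R}^c$ the all-ones vector, and $\lambda_1,\ldots,\lambda_c$ the eigenvalues of $\Phi$ with corresponding orthonormal eigenvectors $x_1,\ldots,x_c$. Then \[F_p=\sum_{i=1}^c(\mathbf{1}^\intercal x_i)^2\,\lambda_i^p\qquad(p\in\mathbb{N}_0).\]
   Context: A threshold graph is a simple graph whose vertices can be ordered $v_1,\ldots,v_n$ so that for each $2\le i\le n$, $v_i$ is either adjacent to all of $v_1,\ldots,v_{i-1}$ (then $a_i=1$) or to none of them (then $a_i=0$); by convention $a_1=1$. Vertex $v_i$ is of type 1 if $a_i=1$ and of type 0 if $a_i=0$; $c$ and $z$ are the numbers of type 1 and type 0 vertices. The backwards zero position sequence $(b_1,\ldots,b_z)$: $b_i$ is the number of type 1 vertices appearing after the $i$-th type 0 vertex in the order $v_1,\ldots,v_n$. The forward one position sequence $(f_1,\ldots,f_c)$: $f_i$ is the number of type 0 vertices appearing before the $i$-th type 1 vertex in the order $v_1,\ldots,v_n$. Define $F_0=c$ and for $p\ge1$, $F_p=\sum_{i_1,\ldots,i_p=1}^{z} b_{i_1}\min\{b_{i_1},b_{i_2}\}\cdots\min\{b_{i_{p-1}},b_{i_p}\}\,b_{i_p}$. *)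

(* Defs.v *)
From HB Require Import structures.
From mathcomp Require Import all_boot all_order all_algebra.
From mathcomp Require Import all_classical all_reals.
Set Implicit Arguments. Unset Strict Implicit. Unset Printing Implicit Defensive.
Import Order.TTheory GRing.Theory Num.Theory.

(* A threshold graph is given by its creation sequence s = [:: a_1; ...; a_n]
   (true = type 1, false = type 0), with the convention a_1 = true. *)

(* vertices 'I_n (v_{i+1} is index i); v_i ~ v_j (i < j) iff a_j = 1 *)
Definition thr_adj (s : seq bool) (n : nat) : rel 'I_n :=
  fun i j => (i != j) && nth false s (maxn i j).

Definition thr_connected (s : seq bool) (n : nat) : Prop :=
  forall i j : 'I_n, connect (@thr_adj s n) i j.

Definition thr_size (s : seq bool) (n : nat) : nat :=
  #|[set p : 'I_n * 'I_n | (p.1 < p.2) && thr_adj s p.1 p.2]|.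

Definition ntype1 (s : seq bool) : nat := count id s.
Definition ntype0 (s : seq bool) : nat := count negb s.

Fixpoint bseq (s : seq bool) : seq nat :=
  match s with
  | [::] => [::]
  | x :: t => if x then bseq t else count id t :: bseq t
  end.

(* forward one position sequence: for each type 1 vertex (in order),
   the number of type 0 vertices before it *)
Fixpoint fseq_aux (k : nat) (s : seq bool) : seq nat :=
  match s with
  | [::] => [::]
  | x :: t => if x then k :: fseq_aux k t else fseq_aux k.+1 t
  end.
Definition fseq (s : seq bool) : seq nat := fseq_aux 0 s.

(* F_0 = c ; F_{p+1} = sum over (i_1,...,i_{p+1}) in [1..z]^{p+1} of
   b_{i_1} min(b_{i_1},b_{i_2}) ... min(b_{i_p},b_{i_{p+1}}) b_{i_{p+1}}
   (indices 0-based here) *)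
Definition Fnum (s : seq bool) (p : nat) : nat :=
  match p with
  | 0 => ntype1 s
  | q.+1 =>
    let b := fun i : 'I_(ntype0 s) => nth 0 (bseq s) i in
    \sum_(g : {ffun 'I_q.+1 -> 'I_(ntype0 s)})
       (b (g ord0)
        * (\prod_(k < q) minn (b (g (widen_ord (leqnSn q) k))) (b (g (lift ord0 k))))
        * b (g ord_max))
  end.

Definition Phi (R : nzRingType) (s : seq bool) : 'M[R]_(ntype1 s) :=
  \matrix_(i, j) ((nth 0%N (fseq s) (minn i j))%:R)%R.

(* Main.v *)
Require Import Defs.
From HB Require Import structures.
From mathcomp Require Import all_boot all_order all_algebra.
From mathcomp Require Import all_classical all_reals.
From mathcomp Require Import zify.
Import Order.TTheory GRing.Theory Num.Theory.

Lemma size_fseq_aux m s : size (fseq_aux m s) = count id s.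
Proof. by elim: s m => [|[] t IH] m //=; rewrite IH. Qed.

Lemma fseq_aux_ge m s : all (leq m) (fseq_aux m s).
Proof.
elim: s m => [|[] t IH] m //=; first by rewrite leqnn IH.
apply/allP => x Hx; have := allP (IH m.+1) x Hx; exact: ltnW.
Qed.

Lemma fseq_aux_le m s : all (fun f => f <= m + count negb s) (fseq_aux m s).
Proof.
elim: s m => [|[] t IH] m //=.
  by rewrite leq_addr /= IH.
by rewrite -addSnnS; apply: IH.
Qed.

Lemma fseq_aux_path m s : path leq m (fseq_aux m s).
Proof.
elim: s m => [|[] t IH] m //=; first by rewrite leqnn IH.
by apply: (path_le leq_trans (leqnSn m)).
Qed.

Lemma bseq_count m s k : k < count negb s ->
  nth 0 (Defs.bseq s) k = count (fun f => m + k < f) (fseq_aux m s).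
Proof.
elim: s m k => [|[] t IH] m k //=.
  by move=> Hk; rewrite (IH m k Hk) ltnNge leq_addr.
case: k => [|k] /= Hk.
  rewrite addn0 -(size_fseq_aux m.+1) -count_predT.
  apply: eq_in_count => x Hx /=; by rewrite (allP (fseq_aux_ge m.+1 t) x Hx).
by rewrite (IH m.+1 k Hk) addSnnS.
Qed.

Local Open Scope ring_scope.
Section FF.
Variables (R : comNzRingType) (z : nat).

Definition consf q (x : 'I_z) (g : {ffun 'I_q.+1 -> 'I_z}) : {ffun 'I_q.+2 -> 'I_z} :=
  [ffun i : 'I_q.+2 => if unlift ord0 i is Some j then g j else x].

Arguments consf {q}.

Lemma consf0 q x g : @consf q x g ord0 = x.
Proof. by rewrite ffunE unlift_none. Qed.

Lemma consfS q x g j : @consf q x g (lift ord0 j) = g j.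
Proof. by rewrite ffunE liftK. Qed.

Lemma sum_ffunS q (F : {ffun 'I_q.+2 -> 'I_z} -> R) :
  \sum_g F g = \sum_(x : 'I_z) \sum_(g : {ffun 'I_q.+1 -> 'I_z}) F (consf x g).
Proof.
rewrite pair_big /=.
rewrite (reindex (fun p : 'I_z * {ffun 'I_q.+1 -> 'I_z} => consf p.1 p.2)) //=.
apply: onW_bij.
exists (fun g : {ffun 'I_q.+2 -> 'I_z} => (g ord0, [ffun j => g (lift ord0 j)])).
  move=> [x g] /=; rewrite consf0; congr (_, _); apply/ffunP => j.
  by rewrite ffunE consfS.
move=> g; apply/ffunP => i; rewrite ffunE.
by case: unliftP => [j ->|->] //; rewrite ffunE.
Qed.

Lemma sum_ffun1 (F : {ffun 'I_1 -> 'I_z} -> R) :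
  \sum_g F g = \sum_(x : 'I_z) F [ffun _ => x].
Proof.
rewrite (reindex (fun x : 'I_z => [ffun _ : 'I_1 => x])) //=.
apply: onW_bij.
exists (fun g : {ffun 'I_1 -> 'I_z} => g ord0).
  by move=> x; rewrite ffunE.
move=> g /=. apply/ffunP => i. rewrite ffunE. by rewrite (ord1 i).
Qed.

Variables (M : 'I_z -> 'I_z -> R) (w : 'I_z -> R).

Definition T q (v : 'I_z -> R) :=
  \sum_(g : {ffun 'I_q.+1 -> 'I_z})
    (v (g ord0) * \prod_(k < q) M (g (widen_ord (leqnSn q) k)) (g (lift ord0 k))
      * w (g ord_max)).

Lemma T0 v : T 0 v = \sum_(x : 'I_z) v x * w x.
Proof.
rewrite /T sum_ffun1; apply: eq_bigr => x _.
by rewrite big_ord0 !ffunE mulr1.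
Qed.

Lemma TS q v : T q.+1 v = T q (fun y => \sum_(x : 'I_z) v x * M x y).
Proof.
rewrite /T sum_ffunS exchange_big /=; apply: eq_bigr => g _.
rewrite !big_distrl; apply: eq_bigr => x _ /=.
rewrite big_ord_recl.
have -> : widen_ord (leqnSn q.+1) ord0 = ord0 by apply: val_inj.
have -> : (ord_max : 'I_q.+2) = lift ord0 (ord_max : 'I_q.+1) by apply: val_inj.
rewrite consf0 !consfS.
have -> : \prod_(i < q) M (consf x g (widen_ord (leqnSn q.+1) (lift ord0 i)))
              (consf x g (lift ord0 (lift ord0 i)))
        = \prod_(k < q) M (g (widen_ord (leqnSn q) k)) (g (lift ord0 k)).
  apply: eq_bigr => k _.
  have -> : widen_ord (leqnSn q.+1) (lift ord0 k) = lift ord0 (widen_ord (leqnSn q) k)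
    by apply: val_inj.
  by rewrite !consfS.
by rewrite !mulrA.
Qed.

End FF.
Arguments T {R z}.

Lemma T_ext (R : comNzRingType) z M w q (v v' : 'I_z -> R) :
  v =1 v' -> T M w q v = T M w q v'.
Proof. by move=> H; apply: eq_bigr => g _; rewrite H. Qed.

Lemma T_mx (R : comNzRingType) z (Mm : 'M[R]_z) (wc : 'cV[R]_z) q (r : 'rV[R]_z) :
  T (fun x y => Mm x y) (fun x => wc x 0) q (fun x => r 0 x)
  = ((iter q (fun r0 => r0 *m Mm) r) *m wc) 0 0.
Proof.
elim: q r => [|q IH] r.
  by rewrite T0 /= mxE.
rewrite TS (@T_ext _ _ _ _ _ _ (fun y => (r *m Mm) 0 y)); last first.
  by move=> y; rewrite mxE.
by rewrite IH iterSr.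
Qed.

Lemma sum_lt z a : (\sum_(k < z) (k < a : nat) = minn a z)%N.
Proof.
elim: z => [|z IH]; first by rewrite big_ord0 minn0.
rewrite big_ord_recr /= IH.
by case: (ltnP z a) => H /=; lia.
Qed.

Lemma count_sum_nth (P : pred nat) l :
  count P l = (\sum_(j < size l) (P (nth 0%N l j) : nat))%N.
Proof.
rewrite -sum1_count big_mkcond (big_nth 0%N) big_mkord.
by apply: eq_bigr => j _; case: (P _).
Qed.

Section Main.
Variables (R : realType) (s : seq bool).
Local Notation c := (ntype1 s).
Local Notation z := (ntype0 s).
Local Notation f j := (nth 0%N (fseq s) j).
Local Notation bb k := (nth 0%N (Defs.bseq s) k).

Definition Nm : 'M[R]_(c, z) := \matrix_(j, k) ((k < f j)%N%:R).
Definition uu : 'rV[R]_c := const_mx 1.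

Lemma size_fseq : size (fseq s) = c.
Proof. exact: size_fseq_aux. Qed.

Lemma f_le (j : 'I_c) : (f j <= z)%N.
Proof.
have := allP (fseq_aux_le 0 s) (f j); rewrite add0n; apply.
by apply: mem_nth; rewrite size_fseq.
Qed.

Lemma f_mono {i j : 'I_c} : (i <= j)%N -> (f i <= f j)%N.
Proof.
move=> H; apply: (sorted_leq_nth leq_trans leqnn) => //; last by rewrite inE size_fseq.
  exact: (path_sorted (fseq_aux_path 0 s)).
by rewrite inE size_fseq.
Qed.

Lemma F1 : Nm *m Nm^T = Phi R s.
Proof.
apply/matrixP => i j; rewrite !mxE.
have -> : \sum_k Nm i k * Nm^T k j = ((\sum_(k < z) (k < minn (f i) (f j) : nat))%N)%:R.
  rewrite natr_sum; apply: eq_bigr => k _; rewrite !mxE -natrM mulnb ltn_min //.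
rewrite sum_lt.
have -> : minn (minn (f i) (f j)) z = minn (f i) (f j).
  by apply/minn_idPl; rewrite geq_min f_le.
case: (leqP i j) => H.
  by rewrite (minn_idPl (f_mono H)).
by rewrite (minn_idPr (f_mono (ltnW H))).
Qed.

Lemma countf_lt k : (k < z)%N -> count (fun x => k < x)%N (fseq s) = bb k.
Proof. by move=> H; rewrite (@bseq_count 0 s k H). Qed.

Lemma F2 : uu *m Nm = \row_k (bb k)%:R.
Proof.
apply/matrixP => i k; rewrite !mxE -(@countf_lt k (ltn_ord k)) count_sum_nth.
rewrite natr_sum size_fseq; apply: eq_bigr => j _; by rewrite !mxE mul1r.
Qed.

Lemma F3 : Nm^T *m Nm = \matrix_(k, l) (minn (bb k) (bb l))%:R.
Proof.
apply/matrixP => k l; rewrite !mxE.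
rewrite -(@countf_lt k (ltn_ord k)) -(@countf_lt l (ltn_ord l)).
have -> : minn (count (fun x => k < x)%N (fseq s)) (count (fun x => l < x)%N (fseq s))
   = count (fun x => maxn k l < x)%N (fseq s).
  case: (leqP k l) => H.
    apply/minn_idPr; apply: sub_count => x /=.
    by move=> Hx; apply: leq_ltn_trans Hx.
  apply/minn_idPl; apply: sub_count => x /=.
  by move=> Hx; apply: ltn_trans Hx.
rewrite count_sum_nth natr_sum size_fseq; apply: eq_bigr => j _.
by rewrite !mxE -natrM mulnb gtn_max.
Qed.

Lemma iter_comm q (r : 'rV[R]_c) :
  iter q (fun r0 => r0 *m (Nm^T *m Nm)) (r *m Nm)
  = iter q (fun r0 => r0 *m (Nm *m Nm^T)) r *m Nm.
Proof.
elim: q => [|q IH] //=; by rewrite IH !mulmxA.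
Qed.

Lemma Fnum_mx p :
  (Fnum s p)%:R = ((iter p (fun r0 => r0 *m Phi R s) uu) *m uu^T) 0 0 :> R.
Proof.
case: p => [|q].
  rewrite /= mxE /Fnum /ntype1.
  rewrite -[X in X%:R]card_ord -sum1_card natr_sum.
  by apply: eq_bigr => j _; rewrite !mxE mulr1.
rewrite /Fnum natr_sum.
rewrite (_ : \sum_(i : {ffun 'I_q.+1 -> 'I_z}) _ =
  T (fun x y => (Nm^T *m Nm) x y) (fun x => ((uu *m Nm)^T) x 0) q
    (fun x => (uu *m Nm) 0 x)); last first.
  apply: eq_bigr => g _.
  rewrite !natrM natr_prod F2 F3 !mxE; congr (_ * _ * _).
  by apply: eq_bigr => k _; rewrite mxE.
rewrite T_mx iter_comm -F1 iterS.
by rewrite trmx_mul -!mulmxA.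
Qed.

End Main.

Lemma spec_iter (R : comUnitRingType) k (P X : 'M[R]_k) (lam : 'rV[R]_k) (r : 'rV[R]_k) :
  X^T *m X = 1%:M -> P *m X = X *m diag_mx lam ->
  forall p, iter p (fun r0 => r0 *m P) r
            = r *m X *m diag_mx (\row_i (lam 0 i ^+ p)) *m X^T.
Proof.
move=> Ho He.
have HXX : X *m X^T = 1%:M by apply: mulmx1C.
have HP : P = X *m diag_mx lam *m X^T by rewrite -He -mulmxA HXX mulmx1.
elim=> [|p IH] /=.
  rewrite mul_mx_diag.
  have -> : (\matrix_(i, j) ((r *m X) i j * (\row_i0 (lam 0 i0 ^+ 0)) 0 j)) = r *m X.
    by apply/matrixP => i j; rewrite !mxE expr0 mulr1.
  by rewrite -mulmxA HXX mulmx1.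
rewrite IH {1}HP.
rewrite -!mulmxA; congr (_ *m _); congr (_ *m _).
rewrite !mulmxA; congr (_ *m _).
rewrite -(mulmxA _ X^T X) Ho mulmx1 mulmx_diag; congr diag_mx.
by apply/matrixP => i j; rewrite !mxE exprSr.
Qed.

Theorem corollaryA4 (R : realType) (n : nat) (s : seq bool)
  (Hsize : size s = n) (Ha1 : nth false s 0 = true)
  (Hn : (4 <= n)%N)
  (Hconn : thr_connected s n)
  (Hm1 : (n - 1 < thr_size s n)%N) (Hm2 : (thr_size s n < 'C(n, 2))%N)
  (lam : 'rV[R]_(ntype1 s)) (X : 'M[R]_(ntype1 s))
  (Horth : X^T *m X = 1%:M)
  (Heig : Phi R s *m X = X *m diag_mx lam) :
  forall p : nat,
    (Fnum s p)%:R = \sum_(i < ntype1 s) (\sum_(j < ntype1 s) X j i) ^+ 2 * lam 0 i ^+ p.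
Proof.
move=> p; rewrite Fnum_mx (@spec_iter _ _ _ _ _ _ Horth Heig).
rewrite -(mulmxA _ X^T) -trmx_mul mxE; apply: eq_bigr => i _.
have Hy : \sum_j uu R s 0 j * X j i = \sum_(j < ntype1 s) X j i.
  by apply: eq_bigr => j _; rewrite mxE mul1r.
rewrite mul_mx_diag !mxE Hy.
by rewrite expr2 mulrAC.
Qed.
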